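(* The partially ordered set $(\mathcal{C}_{m,n},\le)$ is a lattice.
   Context: $\mathcal{C}_{m,n}$ is the set of all convex $m\times n$ $(0,1)$-matrices (matrices in which the 1's in every row and every column occur consecutively), and $\le$ is the entrywise partial order. *)

(* Defs.v *)
From mathcomp Require Import all_boot all_algebra.
Set Implicit Arguments. Unset Strict Implicit. Unset Printing Implicit Defensive.

(* (0,1)-matrices are represented as boolean matrices 'M[bool]_(m, n):
   entry true = 1, false = 0. *)

Definition row_convex m n (A : 'M[bool]_(m, n)) : Prop :=
  forall (i : 'I_m) (j1 j j2 : 'I_n),
    j1 <= j <= j2 -> A i j1 -> A i j2 -> A i j.

Definition col_convex m n (A : 'M[bool]_(m, n)) : Prop :=
  forall (j : 'I_n) (i1 i i2 : 'I_m),
    i1 <= i <= i2 -> A i1 j -> A i2 j -> A i j.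

Definition convex_mx m n (A : 'M[bool]_(m, n)) : Prop :=
  row_convex A /\ col_convex A.

Definition mx_le m n (A B : 'M[bool]_(m, n)) : Prop :=
  forall i j, A i j -> B i j.

Definition is_convex_join m n (A B X : 'M[bool]_(m, n)) : Prop :=
  [/\ convex_mx X, mx_le A X, mx_le B X &
      forall C, convex_mx C -> mx_le A C -> mx_le B C -> mx_le X C].

Definition is_convex_meet m n (A B X : 'M[bool]_(m, n)) : Prop :=
  [/\ convex_mx X, mx_le X A, mx_le X B &
      forall C, convex_mx C -> mx_le C A -> mx_le C B -> mx_le C X].

(* Main.v *)
Require Import Defs.
From mathcomp Require Import all_boot all_algebra.
Set Implicit Arguments. Unset Strict Implicit. Unset Printing Implicit Defensive.

Definition rcb m n (A : 'M[bool]_(m, n)) : bool :=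
  [forall i : 'I_m, forall j1 : 'I_n, forall j : 'I_n, forall j2 : 'I_n,
    (j1 <= j <= j2) ==> A i j1 ==> A i j2 ==> A i j].
Definition ccb m n (A : 'M[bool]_(m, n)) : bool :=
  [forall j : 'I_n, forall i1 : 'I_m, forall i : 'I_m, forall i2 : 'I_m,
    (i1 <= i <= i2) ==> A i1 j ==> A i2 j ==> A i j].
Definition mleb m n (A B : 'M[bool]_(m, n)) : bool :=
  [forall i : 'I_m, forall j : 'I_n, A i j ==> B i j].

Lemma rcbP m n (A : 'M[bool]_(m, n)) : reflect (row_convex A) (rcb A).
Proof.
apply: (iffP idP).
- move=> /forallP H i j1 j j2 h a1 a2.
  move: (H i) => /forallP /(_ j1) /forallP /(_ j) /forallP /(_ j2).
  by rewrite h a1 a2.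
- move=> H; apply/forallP => i; apply/forallP => j1; apply/forallP => j;
  apply/forallP => j2; apply/implyP => h; apply/implyP => a1; apply/implyP => a2.
  exact: H h a1 a2.
Qed.

Lemma ccbP m n (A : 'M[bool]_(m, n)) : reflect (col_convex A) (ccb A).
Proof.
apply: (iffP idP).
- move=> /forallP H j i1 i i2 h a1 a2.
  move: (H j) => /forallP /(_ i1) /forallP /(_ i) /forallP /(_ i2).
  by rewrite h a1 a2.
- move=> H; apply/forallP => j; apply/forallP => i1; apply/forallP => i;
  apply/forallP => i2; apply/implyP => h; apply/implyP => a1; apply/implyP => a2.
  exact: H h a1 a2.
Qed.

Lemma mlebP m n (A B : 'M[bool]_(m, n)) : reflect (mx_le A B) (mleb A B).
Proof.
apply: (iffP idP).
- move=> /forallP H i j a; move: (H i) => /forallP /(_ j); by rewrite a.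
- move=> H; apply/forallP => i; apply/forallP => j; apply/implyP; exact: H.
Qed.

Theorem mainTheorem12 (m n : nat) (A B : 'M[bool]_(m, n)) :
  convex_mx A -> convex_mx B ->
  (exists X, is_convex_join A B X) /\ (exists Y, is_convex_meet A B Y).
Proof.
move=> [rA cA] [rB cB]; split.
- pose P := fun C : 'M[bool]_(m, n) => [&& rcb C, ccb C, mleb A C & mleb B C].
  exists (\matrix_(i, j) [forall C, P C ==> C i j])%R.
  have key : forall C, P C -> forall i j,
      ((\matrix_(i, j) [forall C, P C ==> C i j])%R : 'M[bool]_(m, n)) i j -> C i j.
    by move=> C PC i j; rewrite mxE => /forallP /(_ C); rewrite PC.
  split.
  + split.
    * move=> i j1 j j2 h a1 a2; rewrite mxE; apply/forallP => C; apply/implyP => PC.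
      have /and4P [/rcbP r _ _ _] := PC.
      exact: r h (key C PC _ _ a1) (key C PC _ _ a2).
    * move=> j i1 i i2 h a1 a2; rewrite mxE; apply/forallP => C; apply/implyP => PC.
      have /and4P [_ /ccbP c _ _] := PC.
      exact: c h (key C PC _ _ a1) (key C PC _ _ a2).
  + move=> i j a; rewrite mxE; apply/forallP => C; apply/implyP => /and4P [_ _ /mlebP l _].
    exact: l.
  + move=> i j a; rewrite mxE; apply/forallP => C; apply/implyP => /and4P [_ _ _ /mlebP l].
    exact: l.
  + move=> C [rC cC] lA lB; apply: key.
    by rewrite /P; apply/and4P; split; [apply/rcbP|apply/ccbP|apply/mlebP|apply/mlebP].
- exists (\matrix_(i, j) (A i j && B i j))%R; split.
  + split.
    * move=> i j1 j j2 h; rewrite !mxE => /andP [a1 b1] /andP [a2 b2].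
      by rewrite (rA _ _ _ _ h a1 a2) (rB _ _ _ _ h b1 b2).
    * move=> j i1 i i2 h; rewrite !mxE => /andP [a1 b1] /andP [a2 b2].
      by rewrite (cA _ _ _ _ h a1 a2) (cB _ _ _ _ h b1 b2).
  + by move=> i j; rewrite mxE => /andP [].
  + by move=> i j; rewrite mxE => /andP [].
  + by move=> C _ lA lB i j c; rewrite mxE (lA _ _ c) (lB _ _ c).
Qed.
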